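(* Each member of $\mathcal{G}_1$ is cycle-extendable.
   Context: A half biwheel is obtained from a path $P$ of even length (possibly a single vertex) with color classes $A,B$, whose ends $u,v$ lie in $A$, by adding a new vertex $h$ (the hub) adjacent to every vertex of $A$; $u,v$ are the corners (if $P$ is a single vertex the result is $K_2$ and $u=v$). $\mathcal{G}_1$ (generalized wheels) consists of the graphs obtained by taking an odd $k\ge 3$ and disjoint half biwheels $H_0,\dots,H_{k-1}$ with corners $u_i,v_i$, identifying all of their hubs into a single vertex $h$, and adding the edges $v_iu_{i+1}$ for all $0\le i\le k-1$, indices modulo $k$. A matching covered graph (connected, at least two vertices, every edge in a perfect matching) is cycle-extendable if for every even cycle $C$ the graph $G-V(C)$ has a perfect matching. *)

(* Defs.v *)
From mathcomp Require Import all_boot.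
Set Implicit Arguments. Unset Strict Implicit. Unset Printing Implicit Defensive.

Definition is_edge (V : finType) (e : rel V) (E : {set V}) : Prop :=
  exists x y, e x y /\ E = [set x; y].

Definition perfect_matching_on (V : finType) (e : rel V) (S : {set V})
    (M : {set {set V}}) : Prop :=
  (forall E, E \in M -> is_edge e E /\ E \subset S) /\
  (forall x, x \in S -> #|[set E in M | x \in E]| = 1).

Definition perfect_matching (V : finType) (e : rel V) (M : {set {set V}}) :=
  perfect_matching_on e [set: V] M.

Definition matching_covered (V : finType) (e : rel V) : Prop :=
  [/\ forall x y : V, connect e x y,
      2 <= #|V| &
      forall x y, e x y -> exists M, perfect_matching e M /\ [set x; y] \in M].

Definition is_graph_cycle (V : finType) (e : rel V) (c : seq V) : Prop :=
  [/\ cycle e c, uniq c & 3 <= size c].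

Definition cycle_extendable (V : finType) (e : rel V) : Prop :=
  matching_covered e /\
  forall c : seq V, is_graph_cycle e c -> ~~ odd (size c) ->
    exists M, perfect_matching_on e (~: [set x in c]) M.

(* Parameters: k (odd, >= 3) and m : 'I_k -> nat; the i-th half biwheel H_i comes
   from the path P_i = p_{i,0} p_{i,1} ... p_{i,2 m_i} of even length 2 m_i, with
   A-class = even-indexed vertices, corners u_i = p_{i,0}, v_i = p_{i,2 m_i}.
   Vertex None is the common hub h; Some (i; j) is p_{i,j}. *)
Definition gwV (k : nat) (m : 'I_k -> nat) : finType :=
  option {i : 'I_k & 'I_((2 * m i).+1)}.

(* directed version of the non-hub adjacencies: path edges p_{i,j} p_{i,j+1},
   and the edges v_i u_{i+1} (indices mod k) *)
Definition gw_pathadj (k : nat) (m : 'I_k -> nat)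
    (a b : {i : 'I_k & 'I_((2 * m i).+1)}) : bool :=
  ((tag a == tag b) && ((val (tagged a)).+1 == val (tagged b)))
  || [&& val (tagged a) == 2 * m (tag a), val (tagged b) == 0
       & val (tag b) == (val (tag a)).+1 %% k].

Definition gw_adj (k : nat) (m : 'I_k -> nat) (x y : gwV m) : bool :=
  match x, y with
  | None, None => false
  | None, Some b => ~~ odd (val (tagged b))
  | Some a, None => ~~ odd (val (tagged a))
  | Some a, Some b => gw_pathadj a b || gw_pathadj b a
  end.

(* Main.v *)
Require Import Defs.
From mathcomp Require Import all_boot zify.
Set Implicit Arguments. Unset Strict Implicit. Unset Printing Implicit Defensive.

Section Abstract.
Variables (V : finType) (e : rel V) (h : V) (g : nat -> V) (N : nat).
Hypothesis N3 : 3 <= N.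
Hypothesis Nodd : odd N.
Hypothesis gmod : forall t, g (t %% N) = g t.
Hypothesis ginj : forall t u, t < N -> u < N -> g t = g u -> t = u.
Hypothesis gsurj : forall v, v != h -> exists t, v = g t.
Hypothesis gh : forall t, g t != h.
Hypothesis esymm : forall x y, e x y = e y x.
Hypothesis ehh : ~~ e h h.
Hypothesis egg : forall t u, e (g t) (g u) = (u %% N == (t+1) %% N) || (t %% N == (u+1) %% N).
Hypothesis cov : forall t, exists d, [/\ odd d, d < N & e h (g (t + N - d))].

Lemma N0 : 0 < N. Proof. by apply: leq_trans N3. Qed.

Lemma gE a b : (g a = g b) <-> (a %% N = b %% N).
Proof.
split => [H|H]; last by rewrite -gmod H gmod.
apply: ginj; rewrite ?ltn_pmod ?N0 // !gmod //.
Qed.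

Lemma gD a b c : g a = g b -> g (a + c) = g (b + c).
Proof. by move/gE => H; apply/gE; rewrite -modnDml H modnDml. Qed.

Lemma gN a k : g (a + k * N) = g a.
Proof. by apply/gE; rewrite addnC modnMDl. Qed.

Lemma gNl a : g (a + N) = g a.
Proof. by have := gN a 1; rewrite mul1n. Qed.

Lemma ginj' z i j : i < N -> j < N -> g (z + i) = g (z + j) -> i = j.
Proof.
move=> iN jN /gE /eqP; rewrite eqn_modDl => /eqP.
by rewrite !modn_small.
Qed.

Lemma gstep a b : e (g a) (g b) -> g b = g (a + 1) \/ g b = g (a + (N - 1)).
Proof.
rewrite egg => /orP [/eqP H|/eqP H]; [left|right]; apply/gE => //.
rewrite -modnDml H modnDml -addnA (_ : 1 + (N - 1) = N); last by have := N0; lia.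
by rewrite modnDr.
Qed.

Definition pos (v : V) : nat := if [pick t : 'I_N | g t == v] is Some t then val t else 0.

Lemma posK v : v != h -> g (pos v) = v.
Proof.
move=> vh; rewrite /pos; case: pickP => [t /eqP //|H].
have [t vt] := gsurj vh.
by move: (H (Ordinal (ltn_pmod t N0))) => /=; rewrite gmod -vt eqxx.
Qed.

Definition arc z L : {set V} := [set v | [exists i : 'I_L, v == g (z + i)]].

Lemma arcP z L v : reflect (exists2 i, i < L & v = g (z + i)) (v \in arc z L).
Proof.
rewrite inE; apply: (iffP existsP) => [[i /eqP ->]|[i iL ->]].
  by exists i.
by exists (Ordinal iL).
Qed.

Lemma arc_h z L : h \notin arc z L.
Proof. by apply/arcP => [[i _ /eqP]]; rewrite eq_sym (negbTE (gh _)). Qed.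

Lemma arc_disj z L : L <= N -> [disjoint arc z L & arc (z + L) (N - L)].
Proof.
move=> LN; rewrite -setI_eq0; apply/eqP/setP => v; rewrite in_setI in_set0.
apply/negP => /andP [/arcP [i iL ->] /arcP [j jL]].
rewrite -addnA => /ginj'; have := N0; lia.
Qed.

Lemma arc_split z L : L <= N -> arc z L :|: arc (z + L) (N - L) = [set v | v != h].
Proof.
move=> LN; apply/setP => v; rewrite in_setU [X in _ = X]inE.
apply/idP/idP.
  by case/orP => /arcP [i _ ->]; rewrite gh.
move=> /gsurj [t ->].
set j := (t + N - z %% N) %% N.
have jN : j < N by rewrite ltn_pmod // N0.
have Ej : g (z + j) = g t.
  apply/gE; rewrite /j modnDmr -modnDml.
  have zN : z %% N < N by rewrite ltn_pmod // N0.
  by rewrite (_ : z %% N + (t + N - z %% N) = t + N) ?modnDr //; lia.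
case: (ltnP j L) => jL.
  by apply/orP; left; apply/arcP; exists j.
apply/orP; right; apply/arcP; exists (j - L); first lia.
by rewrite -addnA (_ : L + (j - L) = j) //; lia.
Qed.

Lemma arc1 z : arc z 1 = [set g z].
Proof.
apply/setP => v; rewrite inE; apply/arcP/eqP => [[i]|->]; last by exists 0; rewrite ?addn0.
by rewrite ltnS leqn0 => /eqP -> ->; rewrite addn0.
Qed.


Definition pair a : {set V} := [set g a; g (a + 1)].
Definition PM z L : {set {set V}} := [set E | [exists s : 'I_L, E == pair (z + 2 * s)]].

Lemma PMP z L E : reflect (exists2 s, s < L & E = pair (z + 2 * s)) (E \in PM z L).
Proof.
rewrite inE; apply: (iffP existsP) => [[i /eqP ->]|[i iL ->]].
  by exists i.
by exists (Ordinal iL).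
Qed.

Lemma pair_edge a : is_edge e (pair a).
Proof. by exists (g a), (g (a + 1)); split => //; rewrite egg eqxx. Qed.

Lemma PM_ok z L : 2 * L <= N -> perfect_matching_on e (arc z (2 * L)) (PM z L).
Proof.
move=> LN; split.
  move=> E /PMP [s sL ->]; split; first exact: pair_edge.
  apply/subsetP => v; rewrite /pair in_set2 => /orP [] /eqP ->; apply/arcP.
    by exists (2 * s) => //; lia.
  by exists (2 * s + 1); [lia | rewrite !addnA].
move=> v /arcP [i iL ->].
apply/eqP; rewrite (_ : [set E in PM z L | g (z + i) \in E] = [set pair (z + 2 * (i %/ 2))]) ?cards1 //.
apply/setP => E; rewrite in_set in_set1; apply/andP/eqP => [[/PMP [s sL ->]]|->].
  rewrite !inE => /orP [] /eqP; rewrite -?addnA => /ginj' H.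
    by rewrite (_ : s = i %/ 2) //; have := H ltac:(lia) ltac:(lia); lia.
  by rewrite (_ : s = i %/ 2) //; have := H ltac:(lia) ltac:(lia); lia.
split; first by apply/PMP; exists (i %/ 2) => //; lia.
have : i = 2 * (i %/ 2) \/ i = 2 * (i %/ 2) + 1 by lia.
by case=> {1}->; rewrite !inE ?addnA eqxx ?orbT.
Qed.

Lemma pm_union S1 S2 M1 M2 : perfect_matching_on e S1 M1 -> perfect_matching_on e S2 M2 ->
  [disjoint S1 & S2] -> perfect_matching_on e (S1 :|: S2) (M1 :|: M2).
Proof.
move=> [E1 C1] [E2 C2] D; split.
  move=> E; rewrite in_setU => /orP [/E1|/E2] [ed sub]; split => //;
  apply: subset_trans sub _; [exact: subsetUl | exact: subsetUr].
move=> x; rewrite in_setU => /orP [xS|xS].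
  rewrite -(C1 x xS); congr #|pred_of_set _|; apply/setP => E; rewrite !inE.
  case EM1: (E \in M1) => //=; case EM2: (E \in M2) => //=.
  apply/negbTE/negP => xE; have [_ sub] := E2 E EM2.
  by have := subsetP sub x xE; rewrite (disjointFr D xS).
rewrite -(C2 x xS); congr #|pred_of_set _|; apply/setP => E; rewrite !inE.
case EM2: (E \in M2); rewrite ?orbT ?orbF //=.
case EM1: (E \in M1) => //=.
apply/negbTE/negP => xE; have [_ sub] := E1 E EM1.
by have := subsetP sub x xE; rewrite (disjointFl D xS).
Qed.

Lemma pm_single x y : e x y -> perfect_matching_on e [set x; y] [set [set x; y]].
Proof.
move=> exy; split.
  by move=> E; rewrite inE => /eqP ->; split => //; exists x, y.
move=> v vin; apply/eqP.
rewrite (_ : [set E in [set [set x; y]] | v \in E] = [set [set x; y]]) ?cards1 //.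
apply/setP => E; rewrite in_set; apply/andP/idP => [[] //|EE]; split => //.
by move: EE; rewrite in_set1 => /eqP ->.
Qed.

Lemma Mx_ok x : e h (g x) -> perfect_matching e ([set [set h; g x]] :|: PM (x + 1) ((N - 1) %/ 2)).
Proof.
move=> ehx; rewrite /perfect_matching.
have E2 : 2 * ((N - 1) %/ 2) = N - 1 by lia.
have -> : [set: V] = [set h; g x] :|: arc (x + 1) (2 * ((N - 1) %/ 2)).
  rewrite E2; apply/setP => v; rewrite inE in_setU.
  case: (eqVneq v h) => [->|vh]; first by rewrite !inE eqxx.
  have : v \in [set v | v != h] by rewrite inE.
  rewrite -(arc_split x (_ : 1 <= N)) ?N0 // arc1 in_setU in_set1 => /orP [/eqP ->|->].
    by rewrite !inE eqxx orbT.
  by rewrite orbT.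
apply: pm_union; [exact: pm_single | apply: PM_ok; lia | ].
rewrite E2 -setI_eq0; apply/eqP/setP => v; rewrite in_setI in_set0 !in_set2.
apply/negP => /andP [/orP [/eqP -> | /eqP ->] H].
  by move: H; apply/negP; apply: arc_h.
have gx : g x \in arc x 1 by rewrite arc1 in_set1.
have D : [disjoint arc x 1 & arc (x + 1) (N - 1)] by apply: arc_disj; apply: N0.
by rewrite (disjointFr D gx) in H.
Qed.


Lemma rim_edge_pm a : exists M, perfect_matching e M /\ pair a \in M.
Proof.
have [d [dodd dN ehx]] := cov a.
exists ([set [set h; g (a + N - d)]] :|: PM (a + N - d + 1) ((N - 1) %/ 2)); split.
  exact: Mx_ok.
rewrite in_setU; apply/orP; right; apply/PMP; exists ((d - 1) %/ 2); first lia.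
have E : a + N - d + 1 + 2 * ((d - 1) %/ 2) = a + N by lia.
by rewrite /pair E addnAC !gNl.
Qed.

Lemma mc : matching_covered e.
Proof.
have c0 : forall t, connect e (g 0) (g t).
  elim => [|t IH]; first exact: connect0.
  by apply: connect_trans IH (connect1 _); rewrite egg addn1 eqxx.
have cv : forall v, connect e (g 0) v.
  move=> v; case: (eqVneq v h) => [->|vh]; last by have [t ->] := gsurj vh.
  have [d [_ _ ehx]] := cov 0.
  by apply: (connect_trans (c0 (0 + N - d))); apply: connect1; rewrite esymm.
split.
- move=> x y; apply: connect_trans (cv y).
  by rewrite (sym_connect_sym esymm).
- have := subset_leq_card (subsetT [set h; g 0]).
  by rewrite cards2 eq_sym gh cardsT.
move=> x y exy.
case: (eqVneq x h) => [xh|xh]; case: (eqVneq y h) => [yh|yh].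
- by move: exy; rewrite xh yh (negbTE ehh).
- have [u yu] := gsurj yh; move: exy; rewrite xh yu => exy.
  by exists ([set [set h; g u]] :|: PM (u + 1) ((N - 1) %/ 2)); split;
    [exact: Mx_ok | rewrite in_setU in_set1 eqxx].
- have [u xu] := gsurj xh; move: exy; rewrite yh xu esymm => exy.
  exists ([set [set h; g u]] :|: PM (u + 1) ((N - 1) %/ 2)); split; first exact: Mx_ok.
  by rewrite in_setU in_set1 setUC eqxx.
have [t xt] := gsurj xh; have [u yu] := gsurj yh.
move: exy; rewrite xt yu egg => /orP [/eqP H|/eqP H].
  have [M [pm PM']] := rim_edge_pm t; exists M; split => //.
  by rewrite /pair in PM'; rewrite (_ : g u = g (t + 1)) //; apply/gE.
have [M [pm PM']] := rim_edge_pm u; exists M; split => //.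
by rewrite /pair in PM'; rewrite setUC (_ : g t = g (u + 1)) //; apply/gE.
Qed.

Lemma dir L (t : nat -> nat) : 2 <= L ->
  (forall i j, i < L -> j < L -> g (t i) = g (t j) -> i = j) ->
  (forall i, i.+1 < L -> e (g (t i)) (g (t i.+1))) ->
  exists2 d, (d = 1 \/ d = N - 1) & forall i, i < L -> g (t i) = g (t 0 + d * i).
Proof.
move=> L2 tinj tstep.
have [d dE Hd1] : exists2 d, (d = 1 \/ d = N - 1) & g (t 1) = g (t 0 + d).
  by case: (gstep (tstep 0 L2)) => H; [exists 1 | exists (N - 1)]; auto.
exists d => //.
suff H : forall i, i.+1 < L -> g (t i) = g (t 0 + d * i) /\ g (t i.+1) = g (t 0 + d * i.+1).
  move=> i iL; case: i iL => [|i] iL; first by rewrite muln0 addn0.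
  by case: (H i iL).
elim => [|i IH] iL.
  by rewrite muln0 addn0 muln1.
have [IH1 IH2] := IH (ltnW iL).
split => //.
have key : forall eps, (eps = 1 \/ eps = N - 1) -> g (t i.+2) = g (t i.+1 + eps) ->
    g (t i.+2) = g (t 0 + d * i.+2).
  move=> eps epsE; rewrite (gD _ IH2) => Hs.
  case: (eqVneq eps d) => [epsd|epsd].
    by rewrite Hs epsd [d * i.+2]mulnSr addnA.
  have E : t 0 + d * i.+1 + eps = t 0 + d * i + N.
    rewrite mulnSr -!addnA; congr (_ + (_ + _)).
    by move: epsd => /eqP; case: dE => ->; case: epsE => ->; lia.
  rewrite E gNl -IH1 in Hs.
  by have := tinj _ _ iL (ltnW (ltnW iL)) Hs; lia.
by case: (gstep (tstep _ iL)) => Hs; apply: (key _ _ Hs); auto.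
Qed.

Lemma path_steps x p : path e x p ->
  forall i, i.+1 < size (x :: p) -> e (nth h (x :: p) i) (nth h (x :: p) i.+1).
Proof. by move=> /(pathP h) H i; apply: H. Qed.

Lemma rim_seq p : 2 <= size p -> uniq p -> h \notin p ->
  (forall i, i.+1 < size p -> e (nth h p i) (nth h p i.+1)) ->
  exists2 d, (d = 1 \/ d = N - 1) &
    (forall i, i < size p -> nth h p i = g (pos (nth h p 0) + d * i)) /\ size p <= N.
Proof.
move=> p2 up hp steps.
have nK : forall i, i < size p -> g (pos (nth h p i)) = nth h p i.
  move=> i ip; apply: posK; apply/eqP => E.
  by move: hp; rewrite -E mem_nth.
have tinj : forall i j, i < size p -> j < size p ->
    g (pos (nth h p i)) = g (pos (nth h p j)) -> i = j.
  move=> i j ip jp; rewrite !nK // => E; apply/eqP.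
  by rewrite -(nth_uniq h ip jp up) E.
have tstep : forall i, i.+1 < size p -> e (g (pos (nth h p i))) (g (pos (nth h p i.+1))).
  by move=> i ip; rewrite !nK ?steps //; apply: ltnW.
have [d dE Hd] := dir p2 tinj tstep.
exists d => //; split.
  by move=> i ip; rewrite -(nK _ ip) Hd.
rewrite leqNgt; apply/negP => Np.
have := Hd _ Np; rewrite gN => H.
have := tinj _ 0 Np (ltn_trans N0 Np) H.
by have := N0; lia.
Qed.


Lemma cyc_nohub c : is_graph_cycle e c -> ~~ odd (size c) -> h \notin c -> False.
Proof.
move=> [cyc uc sc] ev.
case: c cyc uc sc ev => [//|x c'] cyc uc sc ev hc.
move: (cyc); rewrite /= rcons_path => /andP [pc lastE].
have [d dE [Hn LN]] := rim_seq (ltnW sc) uc hc (path_steps pc).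
move: Hn LN; rewrite [nth h (x :: c') 0]/=.
have EL : size (x :: c') = (size c').+1 by [].
move: sc ev uc; rewrite EL.
move: (size c').+1 EL => L EL sc ev uc Hn LN.
set t0 := pos x in Hn.
have xE : x = g t0 by have := Hn 0 ltac:(lia); rewrite muln0 addn0.
have lE : last x c' = g (t0 + d * (L - 1)).
  rewrite (last_nth h) -Hn; last by lia.
  by rewrite -EL /= subn1.
move: lastE; rewrite lE [in X in e _ X]xE.
have key : forall eps, (eps = 1 \/ eps = N - 1) -> g t0 = g (t0 + d * (L - 1) + eps) -> False.
  move=> eps epsE Hs.
  case: (eqVneq eps d) => [epsd|epsd].
    have HsL : g t0 = g (t0 + d * L).
      by rewrite Hs epsd -addnA -mulnSr (_ : (L - 1).+1 = L) //; lia.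
    have gL : g (t0 + L) = g t0.
      case: dE HsL => -> HsL; first by rewrite HsL mul1n.
      rewrite (gD L HsL) (_ : t0 + (N - 1) * L + L = t0 + L * N) ?gN //; have := N0; nia.
    case: (ltnP L N) => LN'.
      have := ginj' (z := t0) LN' N0; rewrite addn0 gL => /(_ erefl); lia.
    have LNe : L = N by lia.
    by move: ev; rewrite LNe Nodd.
  have E : t0 + d * (L - 1) + eps = t0 + d * (L - 2) + N.
    by move: epsd => /eqP; case: dE => ->; case: epsE => ->; nia.
  rewrite E gNl -Hn in Hs; last by lia.
  have : nth h (x :: c') (L - 2) = nth h (x :: c') 0 by rewrite -Hs xE.
  move/eqP; rewrite nth_uniq //; try lia.
  by rewrite EL; lia.
move/gstep => [] /esym Hs; [apply: (key 1) | apply: (key (N - 1))]; auto.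
Qed.


Lemma cyc_hub c : is_graph_cycle e c -> ~~ odd (size c) -> h \in c ->
  exists M, perfect_matching_on e (~: [set x in c]) M.
Proof.
move=> [cyc uc sc] ev hc.
set n := index h c.
have nc : n < size c by rewrite index_mem.
have Ec : rot n c = h :: (drop n.+1 c ++ take n c) by rewrite /rot (drop_nth h nc) nth_index.
move: (drop n.+1 c ++ take n c) Ec => p Ec.
have cyc' : cycle e (h :: p) by rewrite -Ec rot_cycle.
have u' : uniq (h :: p) by rewrite -Ec rot_uniq.
have sp : (size p).+1 = size c by rewrite -(size_rot n c) Ec.
have memc : forall v, (v \in c) = (v \in h :: p) by move=> v; rewrite -Ec mem_rot.
move: u' => /= /andP [hp up].
case: p Ec cyc' sp memc hp up => [|x p'] Ec cyc' sp memc hp up; first by move: sp sc => /= <-.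
move: cyc'; rewrite /= rcons_path => /andP [_ /andP [pp _]].
have q2 : 2 <= size (x :: p') by move: sp sc => /= <-; lia.
have [d dE [Hn LN]] := rim_seq q2 up hp (path_steps pp).
move: Hn LN q2; set q := x :: p'.
rewrite [nth h q 0]/=.
have EL : size c = (size q).+1 by rewrite -sp.
move=> Hn LN q2.
have [L Lq] : exists L, size q = L by eexists.
rewrite Lq in EL Hn LN q2.
set t0 := pos x in Hn.
have [z [Hz1 Hz2]] : exists z, (forall i, i < L -> exists2 j, j < L & nth h q i = g (z + j)) /\
    (forall j, j < L -> exists2 i, i < L & g (z + j) = nth h q i).
  case: dE => dE.
    exists t0; split => i iL; exists i => //; by rewrite Hn // dE mul1n.
  exists (t0 + (N - 1) * (L - 1)); split => i iL.
    exists (L - 1 - i); first lia.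
    rewrite Hn // dE (_ : t0 + (N - 1) * (L - 1) + (L - 1 - i) = t0 + (N - 1) * i + (L - 1 - i) * N) ?gN //.
    by have := N0; nia.
  exists (L - 1 - i); first lia.
  rewrite Hn; last lia.
  rewrite dE (_ : t0 + (N - 1) * (L - 1) + i = t0 + (N - 1) * (L - 1 - i) + i * N) ?gN //.
  by have := N0; nia.
have setE : ~: [set v in c] = arc (z + L) (N - L).
  apply/setP => v; rewrite in_setC in_set memc in_cons.
  case: (eqVneq v h) => [->|vh] /=; first by rewrite (negbTE (arc_h _ _)).
  have : v \in arc z L :|: arc (z + L) (N - L) by rewrite arc_split // inE.
  rewrite in_setU => /orP [va|va].
    rewrite (disjointFr (arc_disj z LN) va); apply/negbTE; rewrite negbK.
    by move/arcP: va => [j jL ->]; have [i iL ->] := Hz2 j jL; apply: mem_nth; rewrite Lq.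
  rewrite va; apply/negP => /(nthP h) [i]; rewrite Lq => iL vi.
  have [j jL vj] := Hz1 i iL.
  have va' : v \in arc z L by apply/arcP; exists j; rewrite -?vi.
  by rewrite (disjointFr (arc_disj z LN) va') in va.
have E2 : 2 * ((N - L) %/ 2) = N - L by lia.
have H := PM_ok (z + L) (L := (N - L) %/ 2) ltac:(lia).
rewrite E2 in H.
by exists (PM (z + L) ((N - L) %/ 2)); rewrite setE.
Qed.

Lemma abstract_ce : cycle_extendable e.
Proof.
split; first exact: mc.
move=> c cc ev; case: (boolP (h \in c)) => hc; first exact: cyc_hub.
by case: (cyc_nohub cc ev hc).
Qed.

End Abstract.
Section Concrete.
Variables (k : nat) (m : 'I_k.+1 -> nat).
Hypothesis k2 : 2 <= k.

Local Notation X := {i : 'I_k.+1 & 'I_((2 * m i).+1)}.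
Definition TT := fun i : 'I_k.+1 => 'I_((2 * m i).+1).

Definition sx (a : X) : X :=
  match a with existT i j =>
    if val j < 2 * m i then Tagged TT (inord (val j).+1 : 'I_((2 * m i).+1))
    else Tagged TT (ord0 : 'I_((2 * m (ordS i))).+1) end.

Definition start i : X := Tagged TT (ord0 : 'I_((2 * m i)).+1).
Definition a0 := start ord0.

Lemma Xeq (a b : X) : (a = b) <-> (tag a = tag b /\ val (tagged a) = val (tagged b)).
Proof.
split => [->//|]. case: a b => [i j] [i' j'] /= [E]; subst i' => /val_inj -> //.
Qed.

Lemma sx_tag a : tag (sx a) = if val (tagged a) < 2 * m (tag a) then tag a else ordS (tag a).
Proof. by case: a => i j /=; case: ifP. Qed.

Lemma sx_tagged a : val (tagged (sx a)) = if val (tagged a) < 2 * m (tag a) then (val (tagged a)).+1 else 0.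
Proof. by case: a => i j /=; case: ifP => // H; rewrite inordK. Qed.

Lemma tagged_le (a : X) : val (tagged a) <= 2 * m (tag a).
Proof. by case: a => i j /=; rewrite -ltnS. Qed.

Lemma modS i K : i < K -> i.+1 %% K = if i.+1 == K then 0 else i.+1.
Proof. by move=> iK; case: eqP => [->|ne]; rewrite ?modnn // modn_small //; lia. Qed.

Lemma pathadjE a b : gw_pathadj a b = (b == sx a).
Proof.
have al := tagged_le a; have bl := tagged_le b.
apply/idP/eqP.
  case/orP.
    move=> /andP [/eqP tE /eqP jE]; apply/Xeq; rewrite sx_tagged sx_tag.
    have E : m (tag a) = m (tag b) by rewrite tE.
    have lt : val (tagged a) < 2 * m (tag a) by lia.
    by rewrite lt.
  move=> /and3P [/eqP ja /eqP jb /eqP tb]; apply/Xeq; rewrite sx_tagged sx_tag ja ltnn.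
  by split => //; apply/val_inj.
move=> ->; rewrite /gw_pathadj -val_eqE sx_tagged sx_tag.
case: ifP => lt; first by rewrite !eqxx.
by rewrite eqxx /= (_ : val (tagged a) = 2 * m (tag a)) ?eqxx //; lia.
Qed.

Lemma iter_in i j : j <= 2 * m i -> tag (iter j sx (start i)) = i /\ val (tagged (iter j sx (start i))) = j.
Proof.
elim: j => [|j IH] ji //.
have [t1 t2] := IH (ltnW ji).
by rewrite iterS sx_tagged sx_tag t2 t1 ji.
Qed.

Lemma iter_end i : iter (2 * m i).+1 sx (start i) = start (ordS i).
Proof.
have [t1 t2] := iter_in (leqnn (2 * m i)).
by apply/Xeq; rewrite iterS sx_tagged sx_tag t2 t1 ltnn.
Qed.

Lemma reach n : n < k.+1 -> exists T, iter T sx a0 = start (inord n).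
Proof.
elim: n => [|n IH] nk.
  by exists 0; apply/Xeq => /=; split => //; apply/val_inj; rewrite /= inordK.
have [T HT] := IH (ltnW nk).
exists ((2 * m (inord n)).+1 + T); rewrite iterD HT iter_end.
apply/Xeq; split => //=; apply/val_inj; rewrite /ordS /= !inordK ?modn_small //; lia.
Qed.

Lemma reach_all b : exists T, iter T sx a0 = b.
Proof.
case: b => i j.
have [T HT] := reach (ltn_ord i); rewrite inord_val in HT.
exists (j + T); rewrite iterD HT.
have [t1 t2] := iter_in (tagged_le (Tagged TT j)).
by apply/Xeq; rewrite t2 t1.
Qed.

Lemma sx_inj : injective sx.
Proof.
move=> a b /Xeq; rewrite !sx_tagged !sx_tag.
have al := tagged_le a; have bl := tagged_le b.
case: ifP => la; case: ifP => lb //; try by case.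
  by case=> t1 /eq_add_S t2; apply/Xeq.
case=> /(congr1 val) /= t1 _.
have tE : tag a = tag b.
  apply/val_inj => /=; move: t1 (ltn_ord (tag a)) (ltn_ord (tag b)).
  rewrite !modS ?ltn_ord //.
  by case: eqP; case: eqP; lia.
have E : m (tag a) = m (tag b) by rewrite tE.
apply/Xeq; split => //; lia.
Qed.


Definition N := order sx a0.

Lemma Nc0 : 0 < N. Proof. exact: order_gt0. Qed.

Lemma iter_mod t : iter (t %% N) sx a0 = iter t sx a0.
Proof.
rewrite {2}(divn_eq t N) addnC iterD.
suff -> : forall q, iter (q * N) sx a0 = a0 by [].
elim => [|q IH] //; by rewrite mulSn iterD IH iter_order //; apply: sx_inj.
Qed.

Lemma iter_inj t u : t < N -> u < N -> iter t sx a0 = iter u sx a0 -> t = u.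
Proof. by move=> tN uN E; rewrite -(findex_iter tN) E findex_iter. Qed.

Lemma iterE t u : (iter t sx a0 == iter u sx a0) = (t %% N == u %% N).
Proof.
rewrite -iter_mod -(iter_mod u); apply/eqP/eqP => [/iter_inj|->] //.
by apply; rewrite ltn_pmod // Nc0.
Qed.

Lemma iterE' t u : (iter u sx a0 == sx (iter t sx a0)) = (u %% N == (t + 1) %% N).
Proof. rewrite addn1; exact: (iterE u t.+1). Qed.

Lemma N_card : N = #|{: X}|.
Proof.
rewrite /N /order; apply: eq_card => b; rewrite !inE.
by have [T <-] := reach_all b; rewrite fconnect_iter.
Qed.

Lemma sum_odd s : odd (sumn [seq (2 * m i).+1 | i <- s]) = odd (size s) /\
  size s <= sumn [seq (2 * m i).+1 | i <- s].
Proof. by elim: s => [|i s [IH1 IH2]] //=; split; lia. Qed.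

Lemma N_odd : odd N = odd k.+1 /\ k.+1 <= N.
Proof.
rewrite N_card card_tagged (_ : [seq #|TT i| | i <- enum 'I_k.+1] = [seq (2 * m i).+1 | i <- enum 'I_k.+1]).
  by have := sum_odd (enum 'I_k.+1); rewrite size_enum_ord.
by apply: eq_map => i; rewrite card_ord.
Qed.


Hypothesis kodd : odd k.+1.

Lemma cov_c t : exists d, [/\ odd d, d < N & ~~ odd (val (tagged (iter (t + N - d) sx a0)))].
Proof.
have [No Nk] := N_odd; rewrite kodd in No.
have ta : iter (t + N) sx a0 = iter t sx a0 by apply/eqP; rewrite iterE modnDr.
set a := iter t sx a0 in ta *.
have al : nat_of_ord (tagged a) <= 2 * m (tag a) := tagged_le a.
case: (boolP (odd (nat_of_ord (tagged a)))) => ja.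
  exists 1; split => //; first lia.
  have sb : sx (iter (t + N - 1) sx a0) = a.
    by rewrite -iterS (_ : (t + N - 1).+1 = t + N) //; have := Nc0; lia.
  pose b' := Tagged TT (inord (nat_of_ord (tagged a)).-1 : 'I_((2 * m (tag a)).+1)).
  have sb' : sx b' = a.
    apply/Xeq; rewrite sx_tagged sx_tag /= inordK; last by lia.
    have c : (nat_of_ord (tagged a)).-1 < 2 * m (tag a) by lia.
    by rewrite c; split => //; lia.
  rewrite -sb' in sb; move/sx_inj: sb => ->.
  by rewrite /= inordK; lia.
case: (ltnP (nat_of_ord (tagged a)) (2 * m (tag a))) => lt.
  exists (N - 2); split; [lia | lia | ].
  rewrite (_ : t + N - (N - 2) = (t.+1).+1); last by lia.
  rewrite !iterS -/a sx_tagged sx_tagged lt sx_tag lt.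
  have lt2 : (nat_of_ord (tagged a)).+1 < 2 * m (tag a) by lia.
  by rewrite lt2 /=; lia.
set i' := ordS (tag a).
have sa : iter t.+1 sx a0 = start i'.
  by apply/Xeq; rewrite iterS -/a sx_tagged sx_tag ltnNge lt.
have MN : 2 * m i' + 2 <= N.
  rewrite leqNgt; apply/negP => NM.
  have [t1 t2] := iter_in (i := i') (j := N - 1) ltac:(lia).
  have E : iter (N - 1) sx (start i') = a.
    rewrite -sa -iterD (_ : N - 1 + t.+1 = t + N) //; have := Nc0; lia.
  rewrite E /i' in t1.
  move: t1 => /(congr1 val) /=; rewrite modS ?ltn_ord //.
  by case: eqP; lia.
exists (N - (2 * m i' + 2)); split; [lia | lia | ].
rewrite (_ : t + N - (N - (2 * m i' + 2)) = (2 * m i').+1 + t.+1); last by lia.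
by rewrite iterD sa iter_end.
Qed.

End Concrete.

Theorem proposition5p8 (V : finType) (e : rel V) (k : nat) (m : 'I_k -> nat)
    (f : gwV m -> V) :
  odd k -> 3 <= k -> bijective f ->
  (forall x y, e (f x) (f y) = gw_adj x y) ->
  cycle_extendable e.
Proof.
case: k m f => [|k] m f kodd k3 fbij ef; first by [].
have k2 : 2 <= k by lia.
have [f' fK f'K] := fbij.
have [Nodd Nk] := N_odd m k2.
refine (@abstract_ce V e (f None) (fun t => f (Some (iter t (@sx k m) (a0 m)))) (N m) _ _ _ _ _ _ _ _ _ _).
- lia.
- by rewrite Nodd.
- by move=> t /=; rewrite iter_mod.
- by move=> t u tN uN /(bij_inj fbij) [] /iter_inj; apply.
- move=> v vh; case E: (f' v) => [b|].
    by have [T HT] := reach_all k2 b; exists T; rewrite HT -E f'K.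
  by move: vh; rewrite -(f'K v) E eqxx.
- by move=> t; apply/eqP => /(bij_inj fbij).
- move=> x y; rewrite -(f'K x) -(f'K y) !ef.
  by case: (f' x) => [a|]; case: (f' y) => [b|] //=; rewrite orbC.
- by rewrite ef.
- by move=> t u; rewrite ef /= !pathadjE // (iterE' m k2 t u) (iterE' m k2 u t).
- move=> t; have [d [d1 d2 d3]] := cov_c m k2 kodd t.
  by exists d; split => //; rewrite ef.
Qed.
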